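(* Let a total cost $N_{tot}\in\mathbb{N}$ be fixed. Under the assumption stated in the context (independent Monte-Carlo estimators $\widehat W_u=\frac1{N_u}\sum_{n=1}^{N_u}\widehat W_u^{(n)}$ of cost $\kappa N_u$), if the Shapley effects are estimated with the subset $W$-aggregation procedure, the solution of the relaxed program $$\min_{(N_u)_{\emptyset\subsetneq u\subsetneq[1:p]}\in(0,+\infty)^{2^p-2}}\sum_{i=1}^p\mathrm{Var}(\widehat\eta_i)\quad\text{subject to}\quad\kappa\sum_{\emptyset\subsetneq u\subsetneq[1:p]}N_u=N_{tot}$$ is $(N_u^* )_{\emptyset\subsetneq u\subsetneq[1:p]}$ with, for all $\emptyset\subsetneq u\subsetneq[1:p]$, $$N_u^*=\frac{N_{tot}}{\kappa}\,\frac{\sqrt{(p-|u|)!\,|u|!\,(p-|u|-1)!\,(|u|-1)!\,\mathrm{Var}(\widehat W_u^{(1)})}}{\sum_{\emptyset\subsetneq v\subsetneq[1:p]}\sqrt{(p-|v|)!\,|v|!\,(p-|v|-1)!\,(|v|-1)!\,\mathrm{Var}(\widehat W_v^{(1)})}}.$$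
   Context: Setting: $\mathbf{X}=(X_1,\dots,X_p)$, $Y=f(\mathbf{X})$ with $f\in L^2(\mathbb{P}_\mathbf{X})$. For $u\subset[1:p]$, $W_u$ denotes either $V_u=\mathrm{Var}(\mathrm{E}(Y|\mathbf{X}_u))$ for all $u$ or $E_u=\mathrm{E}(\mathrm{Var}(Y|\mathbf{X}_{-u}))$ for all $u$, with $-u=[1:p]\setminus u$; $W_\emptyset=0$, $W_{[1:p]}=\mathrm{Var}(Y)$ are taken as known. The Shapley effects are $\eta_i=\frac{1}{p\mathrm{Var}(Y)}\sum_{u\subset -i}\binom{p-1}{|u|}^{-1}(W_{u\cup\{i\}}-W_u)$. Assumption: for all $\emptyset\subsetneq u\subsetneq[1:p]$, $\widehat W_u$ is computed with cost $\kappa N_u$ (number of evaluations of $f$) as $\widehat W_u=\frac1{N_u}\sum_{n=1}^{N_u}\widehat W_u^{(n)}$ with $(\widehat W_u^{(n)})_n$ i.i.d., and the $(\widehat W_u)_u$ are independent; $\kappa\in\mathbb{N}^*$. Subset $W$-aggregation procedure: compute $\widehat W_u$ once for every $u$ (with $\widehat W_\emptyset=0$, $\widehat W_{[1:p]}=\mathrm{Var}(Y)$) and set $\widehat\eta_i=\frac{1}{p\mathrm{Var}(Y)}\sum_{u\subset -i}\binom{p-1}{|u|}^{-1}(\widehat W_{u\cup\{i\}}-\widehat W_u)$ for all $i$. *)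

(* Defs.v *)
From mathcomp Require Import all_boot all_order all_algebra.
Set Implicit Arguments. Unset Strict Implicit. Unset Printing Implicit Defensive.
Import Order.TTheory GRing.Theory Num.Theory.
Local Open Scope ring_scope.

Section Shapley.
Variables (R : rcfType) (p : nat).

Definition nontriv (u : {set 'I_p}) : bool := (u != set0) && (u != setT).

(* Coefficient of W_v in the subset W-aggregation estimator:
   eta_i = sum_v aggr_coef VarY i v * W_v, i.e.
   1/(p VarY) sum_{u subset -i} C(p-1,|u|)^{-1} ([v = u U {i}] - [v = u]). *)
Definition aggr_coef (VarY : R) (i : 'I_p) (v : {set 'I_p}) : R :=
  (p%:R * VarY)^-1 *
  \sum_(u : {set 'I_p} | i \notin u)
     ('C(p.-1, #|u|)%:R)^-1 * ((v == i |: u)%:R - (v == u)%:R).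

(* Var(hat W_v) for the Monte-Carlo estimator with N_v samples:
   Var(hat W_v^(1)) / N_v (relaxed to real N_v); 0 for v = emptyset, [1:p]
   whose values are known exactly. *)
Definition varW (sigma2 N : {set 'I_p} -> R) (v : {set 'I_p}) : R :=
  if nontriv v then sigma2 v / N v else 0.

(* Var(hat eta_i), using independence of the (hat W_v)_v. *)
Definition var_eta (VarY : R) (sigma2 N : {set 'I_p} -> R) (i : 'I_p) : R :=
  \sum_(v : {set 'I_p}) (aggr_coef VarY i v) ^+ 2 * varW sigma2 N v.

Definition total_var (VarY : R) (sigma2 N : {set 'I_p} -> R) : R :=
  \sum_(i < p) var_eta VarY sigma2 N i.

Definition feasible (kappa Ntot : nat) (N : {set 'I_p} -> R) : Prop :=
  (forall u, nontriv u -> 0 < N u) /\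
  kappa%:R * (\sum_(u : {set 'I_p} | nontriv u) N u) = Ntot%:R.

Definition shap_weight (u : {set 'I_p}) : R :=
  ((p - #|u|)`! * #|u|`! * (p - #|u| - 1)`! * (#|u| - 1)`!)%:R.

Definition Nstar (kappa Ntot : nat) (sigma2 : {set 'I_p} -> R) (u : {set 'I_p}) : R :=
  Ntot%:R / kappa%:R *
  (Num.sqrt (shap_weight u * sigma2 u) /
   \sum_(v : {set 'I_p} | nontriv v) Num.sqrt (shap_weight v * sigma2 v)).

End Shapley.

(* Main.v *)
Require Import Defs.
From mathcomp Require Import all_boot all_order all_algebra.
From mathcomp Require Import ring lra zify.
Import Order.TTheory GRing.Theory Num.Theory.
Local Open Scope ring_scope.

Section S1.
Variables (R : rcfType) (p : nat).

Lemma aggr_in (VarY : R) (i : 'I_p) (v : {set 'I_p}) : i \in v ->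
  aggr_coef VarY i v = (p%:R*VarY)^-1 * ('C(p.-1, #|v|.-1)%:R)^-1.
Proof.
move=> iv; rewrite /aggr_coef; congr (_ * _).
have iD : i \notin v :\ i by rewrite setD11.
rewrite (bigD1 (v :\ i)) // setD1K // eqxx.
have -> : (v == v :\ i) = false.
  by apply/negbTE; apply/eqP => h; move: iD; rewrite -h iv.
rewrite big1 ?addr0.
  rewrite subr0 mulr1 (cardsD1 i v) iv add1n succnK; exact: addr0.
move=> u /andP [iu nu].
have -> : (v == i |: u) = false.
  by apply/negbTE/eqP => h; move/eqP: nu; apply; rewrite h setU1K.
have -> : (v == u) = false by apply/negbTE/eqP => h; move: iu; rewrite -h iv.
by rewrite subrr mulr0.
Qed.

Lemma aggr_out (VarY : R) (i : 'I_p) (v : {set 'I_p}) : i \notin v ->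
  aggr_coef VarY i v = - ((p%:R*VarY)^-1 * ('C(p.-1, #|v|)%:R)^-1).
Proof.
move=> iv; rewrite /aggr_coef -mulrN; congr (_ * _).
rewrite (bigD1 v) // eqxx.
have -> : (v == i |: v) = false.
  by apply/negbTE/eqP => h; move: iv; rewrite {1}h setU11.
rewrite big1; first by rewrite sub0r mulrN mulr1; exact: addr0.
move=> u /andP [iu nu].
have -> : (v == i |: u) = false.
  by apply/negbTE/eqP => h; move: iv; rewrite h setU11.
have -> : (v == u) = false by apply/negbTE/eqP => h; move/eqP: nu; apply.
by rewrite subrr mulr0.
Qed.

Lemma sum_coef (VarY : R) (v : {set 'I_p}) :
  \sum_(i < p) aggr_coef VarY i v ^+ 2 =
  #|v|%:R * ((p%:R*VarY)^-1 * ('C(p.-1, #|v|.-1)%:R)^-1) ^+ 2 +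
  (p - #|v|)%:R * ((p%:R*VarY)^-1 * ('C(p.-1, #|v|)%:R)^-1) ^+ 2.
Proof.
set c1 := ((p%:R*VarY)^-1 * ('C(p.-1, #|v|.-1)%:R)^-1).
set c2 := ((p%:R*VarY)^-1 * ('C(p.-1, #|v|)%:R)^-1).
have h1 : \sum_(i in v) aggr_coef VarY i v ^+ 2 = #|v|%:R * c1 ^+ 2.
  rewrite (eq_bigr (fun _ => c1 ^+ 2)); last by move=> i iv; rewrite aggr_in.
  by rewrite sumr_const [RHS]mulrC mulr_natr.
have h2 : \sum_(i in ~: v) aggr_coef VarY i v ^+ 2 = (p - #|v|)%:R * c2 ^+ 2.
  rewrite (eq_bigr (fun _ => c2 ^+ 2)); last first.
    by move=> i; rewrite inE => iv; rewrite aggr_out // sqrrN.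
  rewrite sumr_const [RHS]mulrC mulr_natr; congr (_ *+ _).
  by have := cardsC v; rewrite card_ord; lia.
rewrite -h1 -h2 (bigID (mem v)); congr (_ + _).
by apply: eq_bigl => i; rewrite !inE.
Qed.
End S1.

Section S2.
Variables (R : rcfType) (p : nat).

Lemma nontriv_card (v : {set 'I_p}) : nontriv v -> (0 < #|v| < p)%N.
Proof.
case/andP => h0 hT; rewrite card_gt0 h0 /=.
rewrite ltnNge; apply/negP => hp; move/negP: hT; apply.
by rewrite eqEcard subsetT cardsT card_ord.
Qed.

Definition Kc (VarY : R) : R := p%:R / ((p%:R*VarY)^+2 * ((p.-1)`!%:R)^+2).

Lemma sum_coef2 (VarY : R) (v : {set 'I_p}) : VarY != 0 -> nontriv v ->
  \sum_(i < p) aggr_coef VarY i v ^+ 2 = Kc VarY * shap_weight R v.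
Proof.
move=> hV /nontriv_card /andP [h1 h2].
rewrite sum_coef /Kc /shap_weight.
set c := (p%:R * VarY)^-1.
have [k' ek] : exists k', #|v| = k'.+1 by exists #|v|.-1; lia.
have [m em] : exists m, p = (k'.+1 + m.+1)%N by exists (p - #|v|).-1; lia.
have eF : p.-1 = (k'.+1 + m)%N by lia.
rewrite ek eF.
have -> : (k'.+1.-1 = k')%N by [].
have -> : (p - k'.+1 - 1 = m)%N by lia.
have -> : (p - k'.+1 = m.+1)%N by lia.
have -> : (k'.+1 - 1 = k')%N by lia.
have Hinv : forall a b : R, b != 0 -> a^-1 = b / (a * b).
  move=> a b hb; have [->|ha] := eqVneq a 0; first by rewrite invr0 mul0r invr0 mulr0.
  by field; rewrite ha hb.
have eC1 : ('C(k'.+1 + m, k')%:R : R)^-1 = (k'`! * m.+1`!)%:R / (k'.+1 + m)`!%:R.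
  have hb := bin_fact (_ : (k' <= k'.+1 + m)%N).
  rewrite -hb; last by lia.
  have -> : (k'.+1 + m - k' = m.+1)%N by lia.
  rewrite [X in _ / X]natrM; apply: Hinv.
  by rewrite pnatr_eq0 -lt0n muln_gt0 !fact_gt0.
have eC2 : ('C(k'.+1 + m, k'.+1)%:R : R)^-1 = (k'.+1`! * m`!)%:R / (k'.+1 + m)`!%:R.
  have hb := bin_fact (_ : (k'.+1 <= k'.+1 + m)%N).
  rewrite -hb; last by lia.
  have -> : (k'.+1 + m - k'.+1 = m)%N by lia.
  rewrite [X in _ / X]natrM; apply: Hinv.
  by rewrite pnatr_eq0 -lt0n muln_gt0 !fact_gt0.
rewrite eC1 eC2.
have hF : ((k'.+1 + m)`!%:R : R) != 0 by rewrite pnatr_eq0 -lt0n fact_gt0.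
set F := ((k'.+1 + m)`!%:R : R) in hF *.
have eP : (p%:R:R) = k'.+1%:R + m.+1%:R by rewrite em natrD.
rewrite /c eP.
rewrite !(factS k') !(factS m) !natrM.
have hk : (k'.+1%:R : R) + m.+1%:R != 0 by rewrite -natrD pnatr_eq0.
have f1 : (k'`!%:R : R) != 0 by rewrite pnatr_eq0 -lt0n fact_gt0.
have f2 : (m`!%:R : R) != 0 by rewrite pnatr_eq0 -lt0n fact_gt0.
have n1 : (k'.+1%:R : R) != 0 by rewrite pnatr_eq0.
have n2 : (m.+1%:R : R) != 0 by rewrite pnatr_eq0.
have e3 : (1 + k'%:R + (1 + m%:R) : R) = (1 + k' + (1 + m))%N%:R by rewrite !natrD.
by field; rewrite hV hF e3 pnatr_eq0.
Qed.
End S2.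

Section S3.
Variables (R : rcfType).

Lemma total_eq (p : nat) (VarY : R) (sigma2 N : {set 'I_p} -> R) : VarY != 0 ->
  total_var VarY sigma2 N =
  \sum_(v : {set 'I_p} | nontriv v) Kc R p VarY * (shap_weight R v * sigma2 v / N v).
Proof.
move=> hV; rewrite /total_var /var_eta exchange_big /=.
rewrite [RHS]big_mkcond; apply: eq_bigr => v _.
rewrite -mulr_suml /varW; case: ifP => hv; last by rewrite mulr0.
by rewrite sum_coef2 // !mulrA.
Qed.

Lemma opt_id (I : finType) (P : pred I) (a N : I -> R) (T : R) :
  0 < T -> (forall v, P v -> 0 < N v) -> \sum_(v | P v) N v = T ->
  (forall v, P v -> 0 <= a v) ->
  \sum_(v | P v) a v / N v =
  (\sum_(v|P v) Num.sqrt (a v)) ^+ 2 / T +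
  \sum_(v|P v) (Num.sqrt (a v) - (\sum_(v|P v) Num.sqrt (a v)) / T * N v) ^+ 2 / N v.
Proof.
move=> hT hN hs ha.
set S := \sum_(v|P v) Num.sqrt (a v).
rewrite (eq_bigr (fun v => a v / N v - (2 * (S/T)) * Num.sqrt (a v) + (S/T)^+2 * N v)
   (P := P) (F1 := fun v => (Num.sqrt (a v) - S / T * N v) ^+ 2 / N v)); last first.
  move=> v Pv; have := sqr_sqrtr (ha v Pv); set s := Num.sqrt (a v) => hsq.
  rewrite -{1}hsq; field; by rewrite !gt_eqF ?hN.
rewrite big_split /= sumrB -!mulr_sumr hs -/S.
field; by rewrite gt_eqF.
Qed.

End S3.

Theorem proposition3 (R : rcfType) (p kappa Ntot : nat) (VarY : R)
    (sigma2 : {set 'I_p} -> R) :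
  (2 <= p)%N -> (0 < kappa)%N -> (0 < Ntot)%N -> 0 < VarY ->
  (forall u : {set 'I_p}, nontriv u -> 0 < sigma2 u) ->
  feasible kappa Ntot (Nstar kappa Ntot sigma2) /\
  (forall N : {set 'I_p} -> R, feasible kappa Ntot N ->
     total_var VarY sigma2 (Nstar kappa Ntot sigma2) <= total_var VarY sigma2 N /\
     (total_var VarY sigma2 N = total_var VarY sigma2 (Nstar kappa Ntot sigma2) ->
        forall u, nontriv u -> N u = Nstar kappa Ntot sigma2 u)).
Proof.
move=> hp hk hN hV hs.
have hV0 : VarY != 0 by rewrite gt_eqF.
set a := fun v : {set 'I_p} => shap_weight R v * sigma2 v.
have ha : forall v, nontriv v -> 0 < a v.
  move=> v nv; rewrite /a mulr_gt0 ?hs // /shap_weight ltr0n !muln_gt0 !fact_gt0.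
  done.
set S := \sum_(v : {set 'I_p} | nontriv v) Num.sqrt (a v).
set T := (Ntot%:R / kappa%:R : R).
have hT : 0 < T by rewrite /T divr_gt0 // ltr0n.
have hk0 : (kappa%:R : R) != 0 by rewrite pnatr_eq0 -lt0n.
have u0n : nontriv [set (Ordinal (ltnW hp))].
  rewrite /nontriv; apply/andP; split; apply/eqP => h.
    have : (Ordinal (ltnW hp)) \in [set Ordinal (ltnW hp)] by rewrite set11.
    by rewrite h inE.
  have : (Ordinal hp) \in [set: 'I_p] by rewrite inE.
  by rewrite -h inE.
have hS : 0 < S.
  rewrite /S (bigD1 _ u0n).
  have h1 : 0 < Num.sqrt (a [set Ordinal (ltnW hp)]) by rewrite sqrtr_gt0 ha.
  have h2 : 0 <= \sum_(i | nontriv i && (i != [set Ordinal (ltnW hp)])) Num.sqrt (a i).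
    by apply: sumr_ge0 => i _; rewrite sqrtr_ge0.
  rewrite /=; lra.
have eNs : forall v, Nstar kappa Ntot sigma2 v = T * (Num.sqrt (a v) / S) by [].
have feasS : feasible kappa Ntot (Nstar kappa Ntot sigma2).
  split.
    by move=> u nu; rewrite eNs mulr_gt0 // divr_gt0 // sqrtr_gt0 ha.
  under eq_bigr do rewrite eNs.
  rewrite -mulr_sumr -mulr_suml -/S /T; field.
  by rewrite hk0 gt_eqF.
have sumT : forall N, feasible kappa Ntot N ->
    \sum_(v : {set 'I_p} | nontriv v) N v = T.
  move=> N [_ hsum]; rewrite /T -hsum; field; exact: hk0.
have key : forall N, feasible kappa Ntot N ->
   total_var VarY sigma2 N = Kc R p VarY * (S ^+ 2 / T +
     \sum_(v : {set 'I_p} | nontriv v) (Num.sqrt (a v) - S / T * N v) ^+ 2 / N v).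
  move=> N fN; rewrite total_eq // -mulr_sumr.
  rewrite -(@opt_id R _ _ _ _ T) //; first by case: fN.
    exact: sumT.
  by move=> v nv; apply: ltW; apply: ha.
have DS : \sum_(v : {set 'I_p} | nontriv v)
   (Num.sqrt (a v) - S / T * Nstar kappa Ntot sigma2 v) ^+ 2 / Nstar kappa Ntot sigma2 v = 0.
  apply: big1 => v nv; rewrite eNs.
  have -> : S / T * (T * (Num.sqrt (a v) / S)) = Num.sqrt (a v).
    by field; rewrite !gt_eqF.
  by rewrite subrr expr0n /= mul0r.
have hK : 0 < Kc R p VarY.
  rewrite /Kc divr_gt0 // ?ltr0n 1?mulr_gt0 ?exprn_gt0 ?mulr_gt0 ?ltr0n ?fact_gt0 //; lia.
have Dge : forall N, feasible kappa Ntot N -> 0 <= \sum_(v : {set 'I_p} | nontriv v)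
     (Num.sqrt (a v) - S / T * N v) ^+ 2 / N v.
  move=> N [hpos _]; apply: sumr_ge0 => v nv.
  by rewrite divr_ge0 ?sqr_ge0 // ltW // hpos.
split => // N fN.
rewrite (key _ fN) (key _ feasS) DS addr0.
split.
  rewrite ler_pM2l //; have := Dge N fN; lra.
move=> heq u nu.
have hD : \sum_(v : {set 'I_p} | nontriv v) (Num.sqrt (a v) - S / T * N v) ^+ 2 / N v = 0.
  have hK0 : Kc R p VarY != 0 by rewrite gt_eqF.
  have := mulfI hK0 heq; lra.
have := psumr_eq0P _ hD nu.
case: fN => hpos _.
move/(_ (fun v nv => divr_ge0 (sqr_ge0 _) (ltW (hpos v nv)))).
move/eqP; rewrite mulf_eq0 invr_eq0 (gt_eqF (hpos u nu)) orbF sqrf_eq0 subr_eq0.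
move/eqP => e; rewrite eNs e; field.
by rewrite !gt_eqF.
Qed.
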